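(* Let $\mathcal{X} = \mathbb{N}$ and $\mathcal{Y} = \{0,1\} \times \{0,1\}^*$. For $d \in \mathbb{N}$ and binary strings $A, B \in \{0,1\}^d$, define $h_{A,B} \colon \mathcal{X} \to \mathcal{Y}$ by \[ h_{A,B}(x) = \begin{cases} (0, A) & \text{if } (A \oplus B)(x \bmod d) = 0, \\ (1, B) & \text{if } (A \oplus B)(x \bmod d) = 1, \end{cases} \] and let \[ \mathcal{H}_{\mathrm{OTP}} = \big\{ h_{A,B} : A, B \in \{0,1\}^*,\ |A| = |B|,\ A \oplus B \text{ is balanced} \big\}. \] Then $\mathcal{H}_{\mathrm{OTP}}$ is a learnable hypothesis class (in both the transductive and PAC models), but there is no local regularizer for $\mathcal{H}_{\mathrm{OTP}}$ that transductively learns $\mathcal{H}_{\mathrm{OTP}}$.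
   Context: $\{0,1\}^*$ is the set of finite binary strings; $A \oplus B$ is the entrywise XOR of equal-length strings, and $(A\oplus B)(i)$ its $i$th entry, with positions of a length-$d$ string indexed by residues modulo $d$. A string is balanced if it has equally many $0$ entries and $1$ entries. Learning setting: a training set is a finite sequence $S=((x_i,y_i))_{i} \in (\mathcal{X}\times\mathcal{Y})^*$; a learner is a map $\mathcal{A}$ from training sets to functions $\mathcal{X}\to\mathcal{Y}$. The empirical risk of $f$ on $S=((x_i,y_i))_{i\in[n]}$ is $L_S(f)=\frac1n\sum_{i}[f(x_i)\neq y_i]$. For a class $\mathcal{H}\subseteq \mathcal{Y}^{\mathcal{X}}$, unlabeled points $S=(x_i)_{i\in[n]}\in\mathcal{X}^n$ and $h^*\in\mathcal{H}$, the transductive error of $\mathcal{A}$ is $L^{\mathrm{Trans}}_{S,h^*}(\mathcal{A}) = \frac1n\sum_{i\in[n]} [\mathcal{A}(S_{-i},h^* )(x_i)\neq h^*(x_i)]$, where $\mathcal{A}(S_{-i},h^* )$ is the output of $\mathcal{A}$ on the training set $((x_j,h^*(x_j)))_{j\neq i}$. $\mathcal{A}$ is a transductive learner for $\mathcal{H}$ (and $\mathcal{H}$ is transductively learnable) if there is $m:(0,1)\to\mathbb{N}$ such that for all $\epsilon\in(0,1)$, $h^*\in\mathcal{H}$ and $S\in\mathcal{X}^*$ with $|S|\ge m(\epsilon)$, $L^{\mathrm{Trans}}_{S,h^*}(\mathcal{A})\le\epsilon$. PAC learnability: there exist a learner $\mathcal{A}$ and $m:(0,1)^2\to\mathbb{N}$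 such that for every distribution $\mathcal{D}$ on $\mathcal{X}\times\mathcal{Y}$ with some $h\in\mathcal{H}$ satisfying $\Pr_{(x,y)\sim\mathcal{D}}[h(x)\ne y]=0$, and all $\epsilon,\delta\in(0,1)$, a sample $S\sim\mathcal{D}^n$ with $n\ge m(\epsilon,\delta)$ satisfies $\Pr_{(x,y)\sim\mathcal{D}}[\mathcal{A}(S)(x)\neq y]\le\epsilon$ with probability at least $1-\delta$. A local regularizer for $\mathcal{H}$ is a function $\psi:\mathcal{H}\times\mathcal{X}\to\mathbb{R}_{\ge 0}$. A learner $\mathcal{A}$ is induced by $\psi$ if for every training set $S$ and every $x\in\mathcal{X}$, $\mathcal{A}(S)(x)\in\{h(x): h\in\arg\min_{h\in\mathcal{H},\,L_S(h)=0}\psi(h,x)\}$. $\psi$ transductively learns $\mathcal{H}$ if every learner induced by $\psi$ is a transductive learner for $\mathcal{H}$. *)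

(* Defs.v *)
From Stdlib Require Import Reals List Arith Bool.
Import ListNotations.
Open Scope R_scope.

(** Domain X = nat, label space Y = {0,1} x {0,1}^*  (0 = false, 1 = true). *)
Definition X := nat.
Definition Y := (bool * list bool)%type.

Definition Y_eq_dec : forall y1 y2 : Y, {y1 = y2} + {y1 <> y2}.
Proof. decide equality; [apply (list_eq_dec bool_dec) | apply bool_dec]. Defined.

Fixpoint xorl (A B : list bool) : list bool :=
  match A, B with
  | a :: A', b :: B' => xorb a b :: xorl A' B'
  | _, _ => []
  end.

Definition balanced (s : list bool) : Prop :=
  count_occ bool_dec s false = count_occ bool_dec s true.

Definition h_AB (A B : list bool) (x : X) : Y :=
  if nth (x mod length A) (xorl A B) false then (true, B) else (false, A).

Definition H_OTP (h : X -> Y) : Prop :=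
  exists A B : list bool,
    length A = length B /\ balanced (xorl A B) /\ h = h_AB A B.

Definition trainset := list (X * Y).
Definition learner := trainset -> X -> Y.

(** L_S(h) = 0, written out: h agrees with every labelled example of S. *)
Definition consistent (S : trainset) (h : X -> Y) : Prop :=
  forall z, In z S -> h (fst z) = snd z.

Fixpoint remove_nth {T} (i : nat) (l : list T) : list T :=
  match l, i with
  | [], _ => []
  | _ :: l', 0 => l'
  | a :: l', S i' => a :: remove_nth i' l'
  end.

Definition label (h : X -> Y) (S : list X) : trainset := map (fun x => (x, h x)) S.

Definition trans_mistakes (Alg : learner) (S : list X) (h : X -> Y) : nat :=
  fold_right
    (fun i acc =>
       (if Y_eq_dec (Alg (label h (remove_nth i S)) (nth i S 0%nat)) (h (nth i S 0%nat))
        then 0 else 1) + acc)%nat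
    0%nat (seq 0 (length S)).

Definition trans_error (Alg : learner) (S : list X) (h : X -> Y) : R :=
  INR (trans_mistakes Alg S h) / INR (length S).

Definition trans_learner (H : (X -> Y) -> Prop) (Alg : learner) : Prop :=
  exists m : R -> nat,
    forall eps : R, 0 < eps < 1 ->
    forall h, H h ->
    forall S : list X, (m eps <= length S)%nat ->
      trans_error Alg S h <= eps.

Definition trans_learnable (H : (X -> Y) -> Prop) : Prop :=
  exists Alg, trans_learner H Alg.

(** Discrete probability on a countable type, via sums of nonnegative
    weights defined as suprema of finite sums. *)
Definition fsum {T} (f : T -> R) (l : list T) : R :=
  fold_right (fun x acc => f x + acc) 0 l.

Definition prob {T} (w : T -> R) (E : T -> Prop) (v : R) : Prop :=
  is_lub (fun r => exists l : list T, NoDup l /\ (forall z, In z l -> E z) /\ r = fsum w l) v.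

Definition is_distr {T} (p : T -> R) : Prop :=
  (forall z, 0 <= p z) /\ prob p (fun _ => True) 1.

(** Weight of a sample S under D^n (restricted to |S| = n in the events). *)
Definition sample_weight (p : X * Y -> R) (S : trainset) : R :=
  fold_right (fun z acc => p z * acc) 1 S.

Definition realizable (H : (X -> Y) -> Prop) (p : X * Y -> R) : Prop :=
  exists h, H h /\ prob p (fun z => h (fst z) <> snd z) 0.

Definition PAC_learnable (H : (X -> Y) -> Prop) : Prop :=
  exists (Alg : learner) (m : R -> R -> nat),
    forall p : X * Y -> R, is_distr p -> realizable H p ->
    forall eps delta : R, 0 < eps < 1 -> 0 < delta < 1 ->
    forall n : nat, (m eps delta <= n)%nat ->
      exists v, 1 - delta <= v /\
        prob (sample_weight p)
             (fun S => length S = n /\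
                exists e, prob p (fun z => Alg S (fst z) <> snd z) e /\ e <= eps) v.

Definition local_regularizer (H : (X -> Y) -> Prop) (psi : (X -> Y) -> X -> R) : Prop :=
  forall h x, H h -> 0 <= psi h x.

Definition in_argmin (H : (X -> Y) -> Prop) (psi : (X -> Y) -> X -> R)
  (S : trainset) (x : X) (h : X -> Y) : Prop :=
  H h /\ consistent S h /\
  forall h', H h' -> consistent S h' -> psi h x <= psi h' x.

(** Induced learner; the requirement is imposed whenever the argmin is
    nonempty. *)
Definition induced_by (H : (X -> Y) -> Prop) (psi : (X -> Y) -> X -> R) (Alg : learner) : Prop :=
  forall S x, (exists h, in_argmin H psi S x h) ->
    exists h, in_argmin H psi S x h /\ Alg S x = h x.

Definition psi_trans_learns (H : (X -> Y) -> Prop) (psi : (X -> Y) -> X -> R) : Prop :=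
  forall Alg, induced_by H psi Alg -> trans_learner H Alg.

(* Main.v *)
Require Import Defs.
From Stdlib Require Import Reals List Lia Lra Arith Bool ZArith.
From Stdlib Require Import Classical ClassicalEpsilon FunctionalExtensionality.
From mathcomp Require ssreflect ssrfun ssrbool eqtype ssrnat seq fintype finfun bigop.
Import ListNotations.
Open Scope R_scope.

Definition mk (n : nat) (f : nat -> bool) : list bool := map f (seq 0 n).

Lemma length_mk n f : length (mk n f) = n.
Proof. unfold mk; rewrite length_map, length_seq; reflexivity. Qed.

Lemma nth_mk n f i : (i < n)%nat -> nth i (mk n f) false = f i.
Proof.
  intros H; unfold mk.
  rewrite (nth_indep _ false (f 0%nat)) by (rewrite length_map, length_seq; lia).
  rewrite map_nth, seq_nth by lia; reflexivity.
Qed.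

Lemma xorl_map (f g : nat -> bool) l :
  xorl (map f l) (map g l) = map (fun i => xorb (f i) (g i)) l.
Proof. induction l; simpl; congruence. Qed.

Lemma xorl_mk n f g : xorl (mk n f) (mk n g) = mk n (fun i => xorb (f i) (g i)).
Proof. apply xorl_map. Qed.

Lemma length_xorl A B : length (xorl A B) = Nat.min (length A) (length B).
Proof. revert B; induction A; destruct B; simpl; auto. Qed.

Lemma nth_xorl A B i : (i < length A)%nat -> (i < length B)%nat ->
  nth i (xorl A B) false = xorb (nth i A false) (nth i B false).
Proof.
  revert B i; induction A as [|a A IH]; intros [|b B] i H1 H2; simpl in *; try lia.
  destruct i; auto. apply IH; lia.
Qed.

Lemma xorl_inv A B : length A = length B -> xorl A (xorl A B) = B.
Proof.
  revert B; induction A as [|a A IH]; intros [|b B] H; simpl in *; try lia; auto.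
  rewrite IH by lia. rewrite <- xorb_assoc, xorb_nilpotent, xorb_false_l; reflexivity.
Qed.

Lemma xorl_comm A B : xorl A B = xorl B A.
Proof. revert B; induction A; destruct B; simpl; auto. rewrite xorb_comm, IHA; auto. Qed.

Lemma xorl_solve A B C : length A = length B -> xorl A B = C -> B = xorl A C.
Proof. intros H E; subst C; rewrite xorl_inv; auto. Qed.

Lemma remove_nth_map {T U} (f : T -> U) i l : remove_nth i (map f l) = map f (remove_nth i l).
Proof. revert i; induction l; intros [|i]; simpl; auto. rewrite IHl; auto. Qed.

Lemma in_remove_seq n s i x :
  In x (remove_nth i (seq s n)) <-> ((s <= x < s + n)%nat /\ x <> (s + i)%nat).
Proof.
  revert s i; induction n; intros s i; simpl.
  - destruct i; simpl; split; intros; try tauto; lia.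
  - destruct i; simpl.
    + rewrite in_seq. split; intros; lia.
    + rewrite IHn. split; intros; lia.
Qed.

Lemma length_remove_nth {T} i (l : list T) : (i < length l)%nat -> length (remove_nth i l) = pred (length l).
Proof. revert i; induction l; intros [|i] H; simpl in *; try lia. rewrite IHl by lia. destruct l; simpl in *; lia. Qed.

Lemma div2_pos j b : Nat.div2 (2 * j + Nat.b2n b) = j.
Proof.
  destruct b; simpl Nat.b2n.
  - replace (2 * j + 1)%nat with (S (2 * j)) by lia. apply Nat.div2_succ_double.
  - rewrite Nat.add_0_r. apply Nat.div2_double.
Qed.

Lemma odd_pos j b : Nat.odd (2 * j + Nat.b2n b) = b.
Proof.
  destruct b; simpl Nat.b2n.
  - rewrite Nat.odd_add, Nat.odd_mul, Nat.odd_2. reflexivity.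
  - rewrite Nat.add_0_r, Nat.odd_mul, Nat.odd_2. reflexivity.
Qed.

Lemma pos_decomp i : i = (2 * Nat.div2 i + Nat.b2n (Nat.odd i))%nat.
Proof.
  pose proof (Nat.div2_odd i) as H. lia.
Qed.

Lemma b2n_le1 b : (Nat.b2n b <= 1)%nat.
Proof. destruct b; simpl; lia. Qed.

Lemma count_tf (l : list bool) :
  (count_occ bool_dec l true + count_occ bool_dec l false)%nat = length l.
Proof. induction l as [|[] l IH]; simpl; lia. Qed.

Lemma pair_count k : forall (C : list bool) (w : nat -> bool) b,
  length C = (2*k)%nat ->
  (forall j, (j < k)%nat -> nth (2*j + Nat.b2n (w j)) C false = b) ->
  (count_occ bool_dec C b >= k)%nat /\
  (forall j, (j < k)%nat -> nth (2*j + Nat.b2n (negb (w j))) C false = b ->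
     (count_occ bool_dec C b >= S k)%nat).
Proof.
  induction k as [|k IH]; intros C w b HL Hw.
  - split; [lia | intros; lia].
  - destruct C as [|x [|y C]]; simpl in HL; try lia.
    assert (HL' : length C = (2*k)%nat) by lia.
    assert (Hw' : forall j, (j < k)%nat -> nth (2*j + Nat.b2n (w (S j))) C false = b).
    { intros j Hj. pose proof (Hw (S j) ltac:(lia)) as E.
      replace (2 * S j + Nat.b2n (w (S j)))%nat with (S (S (2*j + Nat.b2n (w (S j))))) in E by lia.
      exact E. }
    destruct (IH C (fun j => w (S j)) b HL' Hw') as [IH1 IH2].
    pose proof (Hw 0%nat ltac:(lia)) as E0. simpl in E0.
    assert (Hc : forall u, count_occ bool_dec (x :: y :: C) u =
       ((if bool_dec x u then 1 else 0) + (if bool_dec y u then 1 else 0) + count_occ bool_dec C u)%nat).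
    { intros u; simpl. destruct (bool_dec x u); destruct (bool_dec y u); simpl; lia. }
    rewrite Hc. split.
    + destruct (w 0%nat); simpl in E0; rewrite <- E0 in *; destruct x, y; simpl; lia.
    + intros j Hj Ej. destruct j as [|j].
      * simpl in Ej. destruct (w 0%nat); simpl in E0, Ej; rewrite <- E0 in *; rewrite Ej in *; destruct x, y; simpl in *; try congruence; lia.
      * assert (Ej' : nth (2*j + Nat.b2n (negb (w (S j)))) C false = b).
        { replace (2 * S j + Nat.b2n (negb (w (S j))))%nat with (S (S (2*j + Nat.b2n (negb (w (S j)))))) in Ej by lia.
          exact Ej. }
        pose proof (IH2 j ltac:(lia) Ej').
        destruct (w 0%nat); simpl in E0; rewrite <- E0 in *; destruct x, y; simpl in *; lia.
Qed.

Lemma pair_unique k (C : list bool) (w : nat -> bool) b :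
  length C = (2*k)%nat -> balanced C ->
  (forall j, (j < k)%nat -> nth (2*j + Nat.b2n (w j)) C false = b) ->
  forall i, (i < 2*k)%nat -> nth i C false = if Bool.eqb (Nat.odd i) (w (Nat.div2 i)) then b else negb b.
Proof.
  intros HL Hb Hw i Hi.
  pose proof (pair_count k C w b HL Hw) as [H1 H2].
  pose proof (count_tf C) as Ht. unfold balanced in Hb.
  assert (Hk : count_occ bool_dec C b = k).
  { destruct b; lia. }
  rewrite (pos_decomp i) at 1.
  assert (Hj : (Nat.div2 i < k)%nat).
  { pose proof (pos_decomp i). pose proof (b2n_le1 (Nat.odd i)). lia. }
  destruct (Bool.eqb (Nat.odd i) (w (Nat.div2 i))) eqn:E.
  - apply Bool.eqb_prop in E. rewrite E. apply Hw; auto.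
  - assert (E' : Nat.odd i = negb (w (Nat.div2 i))).
    { destruct (Nat.odd i), (w (Nat.div2 i)); simpl in *; congruence. }
    rewrite E'.
    destruct (nth (2 * Nat.div2 i + Nat.b2n (negb (w (Nat.div2 i)))) C false) eqn:F;
      destruct b; simpl; auto.
    + pose proof (H2 _ Hj F); lia.
    + pose proof (H2 _ Hj F); lia.
Qed.

Definition d0 : X * Y := (0%nat, (false, [])).

Definition AlgP (psi : (X -> Y) -> X -> R) : learner := fun S x =>
  match excluded_middle_informative
          (exists h, in_argmin H_OTP psi S x h /\ h x <> snd (hd d0 S)) with
  | left e => proj1_sig (constructive_indefinite_description _ e) x
  | right _ =>
    match excluded_middle_informative (exists h, in_argmin H_OTP psi S x h) with
    | left e => proj1_sig (constructive_indefinite_description _ e) x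
    | right _ => snd (hd d0 S)
    end
  end.

Lemma AlgP_induced psi : induced_by H_OTP psi (AlgP psi).
Proof.
  intros S x Hex. unfold AlgP.
  destruct (excluded_middle_informative _) as [e|ne].
  - destruct (constructive_indefinite_description _ e) as [h [Hh Hn]]; simpl. exists h; auto.
  - destruct (excluded_middle_informative _) as [e|ne2].
    + destruct (constructive_indefinite_description _ e) as [h Hh]; simpl. exists h; auto.
    + contradiction.
Qed.

Lemma AlgP_wrong psi S x :
  (exists h, in_argmin H_OTP psi S x h /\ h x <> snd (hd d0 S)) -> AlgP psi S x <> snd (hd d0 S).
Proof.
  intros e. unfold AlgP.
  destruct (excluded_middle_informative _) as [e'|ne].
  - destruct (constructive_indefinite_description _ e') as [h [Hh0 Hh]]; simpl. auto.
  - contradiction.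
Qed.

Lemma argmin_list (P : (X -> Y) -> Prop) (f : (X -> Y) -> R) (L : list (X -> Y)) :
  (exists h, P h /\ In h L) ->
  exists m, P m /\ forall h, P h -> In h L -> f m <= f h.
Proof.
  induction L as [|a L IH]; intros [h [Ph Hin]].
  - destruct Hin.
  - destruct (classic (exists h, P h /\ In h L)) as [Hex|Hnex].
    + destruct (IH Hex) as [m [Pm Hm]].
      destruct (classic (P a)) as [Pa|nPa].
      * destruct (Rle_dec (f a) (f m)) as [le|gt].
        -- exists a. split; auto. intros h' Ph' [<-|Hi]; [lra|]. specialize (Hm h' Ph' Hi); lra.
        -- exists m. split; auto. intros h' Ph' [<-|Hi]; [lra|]. auto.
      * exists m. split; auto. intros h' Ph' [<-|Hi]; [contradiction|]. auto.
    + destruct Hin as [<-|Hin]; [|exfalso; apply Hnex; eauto].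
      exists a. split; auto. intros h' Ph' [<-|Hi]; [lra|]. exfalso; apply Hnex; eauto.
Qed.

Fixpoint blists (n : nat) : list (list bool) :=
  match n with
  | O => [[]]
  | S n => map (cons true) (blists n) ++ map (cons false) (blists n)
  end.

Lemma in_blists l : In l (blists (length l)).
Proof.
  induction l as [|[] l IH]; simpl; auto; apply in_or_app; [left|right]; apply in_map; auto.
Qed.

Definition togn (j : nat) (f : nat -> bool) : nat -> bool :=
  fun i => if Nat.eqb i j then negb (f i) else f i.
Definition pcA k (a : nat -> bool) := mk (2*k) (fun i => a (Nat.div2 i)).
Definition cZ k (z : nat -> bool) := mk (2*k) (fun i => xorb (z (Nat.div2 i)) (Nat.odd i)).
Definition Bv k (a z : nat -> bool) :=
  mk (2*k) (fun i => xorb (a (Nat.div2 i)) (xorb (z (Nat.div2 i)) (Nat.odd i))).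
Definition tgt k a z := h_AB (pcA k a) (Bv k a z).
Definition pp (j : nat) (b : bool) : nat := (2 * j + Nat.b2n b)%nat.
Definition SA k (z : nat -> bool) := map (fun j => pp j (z j)) (seq 0 k).
Definition SB k (z : nat -> bool) := map (fun j => pp j (negb (z j))) (seq 0 k).

Lemma pp_lt k j b : (j < k)%nat -> (pp j b < 2 * k)%nat.
Proof. unfold pp; destruct b; simpl; lia. Qed.

Lemma togn_invol j f : togn j (togn j f) = f.
Proof. apply functional_extensionality; intros i; unfold togn; destruct (Nat.eqb i j); auto using negb_involutive. Qed.
Lemma togn_eq j f : togn j f j = negb (f j).
Proof. unfold togn; rewrite Nat.eqb_refl; auto. Qed.
Lemma togn_neq j f i : i <> j -> togn j f i = f i.
Proof. intros H; unfold togn; apply Nat.eqb_neq in H; rewrite H; auto. Qed.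

Lemma length_pcA k a : length (pcA k a) = (2*k)%nat. Proof. apply length_mk. Qed.
Lemma length_Bv k a z : length (Bv k a z) = (2*k)%nat. Proof. apply length_mk. Qed.
Lemma length_cZ k z : length (cZ k z) = (2*k)%nat. Proof. apply length_mk. Qed.

Lemma xorl_pcA_Bv k a z : xorl (pcA k a) (Bv k a z) = cZ k z.
Proof.
  unfold pcA, Bv, cZ; rewrite xorl_mk. unfold mk; apply map_ext; intros i.
  rewrite <- xorb_assoc, xorb_nilpotent, xorb_false_l; auto.
Qed.

Lemma nth_cZ k z j b : (j < k)%nat -> nth (pp j b) (cZ k z) false = xorb (z j) b.
Proof.
  intros H; unfold cZ; rewrite nth_mk by (apply pp_lt; auto).
  unfold pp; rewrite div2_pos, odd_pos; auto.
Qed.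

Lemma balanced_cZ k z : balanced (cZ k z).
Proof.
  unfold balanced.
  assert (H1 : forall j, (j < k)%nat -> nth (2*j + Nat.b2n (z j)) (cZ k z) false = false).
  { intros j Hj. pose proof (nth_cZ k z j (z j) Hj) as E. unfold pp in E. rewrite E. apply xorb_nilpotent. }
  assert (H2 : forall j, (j < k)%nat -> nth (2*j + Nat.b2n (negb (z j))) (cZ k z) false = true).
  { intros j Hj. pose proof (nth_cZ k z j (negb (z j)) Hj) as E. unfold pp in E. rewrite E.
    destruct (z j); auto. }
  destruct (pair_count k (cZ k z) z false (length_cZ k z) H1) as [C1 _].
  destruct (pair_count k (cZ k z) (fun j => negb (z j)) true (length_cZ k z) H2) as [C2 _].
  pose proof (count_tf (cZ k z)). rewrite length_cZ in H. lia.
Qed.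

Lemma H_tgt k a z : H_OTP (tgt k a z).
Proof.
  exists (pcA k a), (Bv k a z). split; [rewrite length_pcA, length_Bv; auto|].
  split; [rewrite xorl_pcA_Bv; apply balanced_cZ | reflexivity].
Qed.

Lemma tgt_at k a z j b : (j < k)%nat ->
  tgt k a z (pp j b) = if xorb (z j) b then (true, Bv k a z) else (false, pcA k a).
Proof.
  intros H; unfold tgt, h_AB. rewrite length_pcA, Nat.mod_small by (apply pp_lt; auto).
  rewrite xorl_pcA_Bv, nth_cZ; auto.
Qed.

Lemma Bv_tog k a z j : Bv k (togn j a) (togn j z) = Bv k a z.
Proof.
  unfold Bv, mk; apply map_ext; intros i. unfold togn.
  destruct (Nat.eqb (Nat.div2 i) j); auto.
  destruct (a (Nat.div2 i)), (z (Nat.div2 i)), (Nat.odd i); auto.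
Qed.

Lemma nth_SA k z j : (j < k)%nat -> nth j (SA k z) 0%nat = pp j (z j).
Proof.
  intros H; unfold SA. rewrite (nth_indep _ 0%nat (pp 0 (z 0%nat))) by (rewrite length_map, length_seq; lia).
  rewrite (map_nth (fun j => pp j (z j)) (seq 0 k) 0%nat j), seq_nth by lia; auto.
Qed.
Lemma nth_SB k z j : (j < k)%nat -> nth j (SB k z) 0%nat = pp j (negb (z j)).
Proof.
  intros H; unfold SB. rewrite (nth_indep _ 0%nat (pp 0 (negb (z 0%nat)))) by (rewrite length_map, length_seq; lia).
  rewrite (map_nth (fun j => pp j (negb (z j))) (seq 0 k) 0%nat j), seq_nth by lia; auto.
Qed.
Lemma length_SA k z : length (SA k z) = k. Proof. unfold SA; rewrite length_map, length_seq; auto. Qed.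
Lemma length_SB k z : length (SB k z) = k. Proof. unfold SB; rewrite length_map, length_seq; auto. Qed.

Lemma in_Tr (h : X -> Y) k (w : nat -> bool) j p :
  In p (label h (remove_nth j (map (fun j => pp j (w j)) (seq 0 k)))) ->
  exists j', (j' < k)%nat /\ j' <> j /\ p = (pp j' (w j'), h (pp j' (w j'))).
Proof.
  unfold label. rewrite remove_nth_map, map_map. intros Hin.
  apply in_map_iff in Hin as [j' [<- Hj']]. apply in_remove_seq in Hj'.
  exists j'; split; [lia|split; [lia|auto]].
Qed.

Lemma in_Tr2 (h : X -> Y) k (w : nat -> bool) j j' :
  (j' < k)%nat -> j' <> j ->
  In (pp j' (w j'), h (pp j' (w j'))) (label h (remove_nth j (map (fun j => pp j (w j)) (seq 0 k)))).
Proof.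
  intros H1 H2. unfold label. rewrite remove_nth_map, map_map.
  apply in_map_iff. exists j'; split; auto. apply in_remove_seq; lia.
Qed.

Lemma other_index k j : (2 <= k)%nat -> exists j', (j' < k)%nat /\ j' <> j.
Proof. intros H. destruct j; [exists 1%nat | exists 0%nat]; lia. Qed.

Lemma hd_in {T} (d : T) l : l <> [] -> In (hd d l) l.
Proof. destruct l; simpl; auto; congruence. Qed.

Lemma hd_Tr (h : X -> Y) k (w : nat -> bool) j y :
  (2 <= k)%nat ->
  (forall j', (j' < k)%nat -> j' <> j -> h (pp j' (w j')) = y) ->
  snd (hd d0 (label h (remove_nth j (map (fun j => pp j (w j)) (seq 0 k))))) = y.
Proof.
  intros Hk Hy. destruct (other_index k j Hk) as [j' [H1 H2]].
  pose proof (in_Tr2 h k w j j' H1 H2) as Hin.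
  assert (Hne : label h (remove_nth j (map (fun j => pp j (w j)) (seq 0 k))) <> []).
  { intros E; rewrite E in Hin; destruct Hin. }
  destruct (in_Tr h k w j _ (hd_in d0 _ Hne)) as [j'' [A [B C]]].
  rewrite C; simpl; auto.
Qed.

Lemma hAB_false A B x A0 : h_AB A B x = (false, A0) ->
  A = A0 /\ nth (x mod length A) (xorl A B) false = false.
Proof. unfold h_AB; destruct (nth _ _ _); intros E; inversion E; auto. Qed.
Lemma hAB_true A B x B0 : h_AB A B x = (true, B0) ->
  B = B0 /\ nth (x mod length A) (xorl A B) false = true.
Proof. unfold h_AB; destruct (nth _ _ _); intros E; inversion E; auto. Qed.

Lemma consistent_label h l : consistent (label h l) h.
Proof. intros p Hp. unfold label in Hp. apply in_map_iff in Hp as [x [<- _]]; auto. Qed.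

Lemma vsA k a z j h : (2 <= k)%nat -> (j < k)%nat ->
  H_OTP h -> consistent (label (tgt k a z) (remove_nth j (SA k z))) h ->
  exists B', length B' = (2*k)%nat /\ balanced (xorl (pcA k a) B') /\ h = h_AB (pcA k a) B' /\
    forall j', (j' < k)%nat -> j' <> j -> nth (pp j' (z j')) (xorl (pcA k a) B') false = false.
Proof.
  intros Hk Hj [A' [B' [HL [Hb ->]]]] Hc.
  assert (Key : forall j', (j' < k)%nat -> j' <> j -> h_AB A' B' (pp j' (z j')) = (false, pcA k a)).
  { intros j' H1 H2. pose proof (Hc _ (in_Tr2 (tgt k a z) k z j j' H1 H2)) as E; simpl in E; rewrite E.
    rewrite tgt_at by auto. rewrite xorb_nilpotent; auto. }
  destruct (other_index k j Hk) as [j0 [H1 H2]].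
  destruct (hAB_false _ _ _ _ (Key j0 H1 H2)) as [-> _].
  exists B'. rewrite length_pcA in HL. split; [lia|]. split; auto. split; auto.
  intros j' H3 H4. destruct (hAB_false _ _ _ _ (Key j' H3 H4)) as [_ E].
  rewrite length_pcA, Nat.mod_small in E by (apply pp_lt; auto). auto.
Qed.

Lemma vsB k a z j h : (2 <= k)%nat -> (j < k)%nat ->
  H_OTP h -> consistent (label (tgt k a z) (remove_nth j (SB k z))) h ->
  exists A', length A' = (2*k)%nat /\ balanced (xorl A' (Bv k a z)) /\ h = h_AB A' (Bv k a z) /\
    forall j', (j' < k)%nat -> j' <> j -> nth (pp j' (negb (z j'))) (xorl A' (Bv k a z)) false = true.
Proof.
  intros Hk Hj [A' [B' [HL [Hb ->]]]] Hc.
  assert (Key : forall j', (j' < k)%nat -> j' <> j -> h_AB A' B' (pp j' (negb (z j'))) = (true, Bv k a z)).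
  { intros j' H1 H2.
    pose proof (Hc _ (in_Tr2 (tgt k a z) k (fun j => negb (z j)) j j' H1 H2)) as E; simpl in E; rewrite E.
    rewrite tgt_at by auto. destruct (z j'); auto. }
  destruct (other_index k j Hk) as [j0 [H1 H2]].
  destruct (hAB_true _ _ _ _ (Key j0 H1 H2)) as [-> _].
  rewrite length_Bv in HL.
  exists A'. split; [lia|]. split; auto. split; auto.
  intros j' H3 H4. destruct (hAB_true _ _ _ _ (Key j' H3 H4)) as [_ E].
  rewrite HL, Nat.mod_small in E by (apply pp_lt; auto). auto.
Qed.

Lemma in_argmin_of (psi : (X -> Y) -> X -> R) S x (L : list (X -> Y)) :
  (forall h, H_OTP h -> consistent S h -> In h L) ->
  (exists h, H_OTP h /\ consistent S h) ->
  exists m, in_argmin H_OTP psi S x m.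
Proof.
  intros Hcov [h0 [H0 C0]].
  destruct (argmin_list (fun h => H_OTP h /\ consistent S h) (fun h => psi h x) L) as [m [[Hm Cm] Hmin]].
  { exists h0; auto. }
  exists m; split; [auto|split; [auto|]]. intros h' H' C'. apply Hmin; auto.
Qed.

Lemma failA psi k a z j : (2 <= k)%nat -> (j < k)%nat ->
  psi (tgt k a (togn j z)) (pp j (z j)) <= psi (tgt k a z) (pp j (z j)) ->
  AlgP psi (label (tgt k a z) (remove_nth j (SA k z))) (pp j (z j)) <> tgt k a z (pp j (z j)).
Proof.
  intros Hk Hj Hle.
  set (Tr := label (tgt k a z) (remove_nth j (SA k z))).
  set (r := pp j (z j)).
  assert (Hy : tgt k a z r = (false, pcA k a)).
  { unfold r; rewrite tgt_at by auto; rewrite xorb_nilpotent; auto. }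
  assert (Hhd : snd (hd d0 Tr) = (false, pcA k a)).
  { apply hd_Tr; auto. intros j' H1 H2. rewrite tgt_at by auto; rewrite xorb_nilpotent; auto. }
  rewrite Hy, <- Hhd. apply AlgP_wrong. rewrite Hhd.
  assert (Hcov : forall h, H_OTP h -> consistent Tr h ->
             In h (map (fun B' => h_AB (pcA k a) B') (blists (2*k)))).
  { intros h Hh Hc. destruct (vsA k a z j h Hk Hj Hh Hc) as [B' [HL [_ [-> _]]]].
    apply in_map. rewrite <- HL. apply in_blists. }
  destruct (in_argmin_of psi Tr r _ Hcov) as [m Hm].
  { exists (tgt k a z); split; [apply H_tgt | apply consistent_label]. }
  destruct (Y_eq_dec (m r) (false, pcA k a)) as [Er|Nr]; [|exists m; auto].
  destruct Hm as [Hm [Cm Mm]].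
  destruct (vsA k a z j m Hk Hj Hm Cm) as [B' [HL [Hb [Em Hz]]]].
  assert (Hr : nth r (xorl (pcA k a) B') false = false).
  { rewrite Em in Er. apply hAB_false in Er as [_ E].
    rewrite length_pcA, Nat.mod_small in E by (apply pp_lt; auto). auto. }
  assert (Hall : forall j', (j' < k)%nat -> nth (2*j' + Nat.b2n (z j')) (xorl (pcA k a) B') false = false).
  { intros j' H1. destruct (Nat.eq_dec j' j) as [->|ne]; [exact Hr|]. apply Hz; auto. }
  assert (HLx : length (xorl (pcA k a) B') = (2*k)%nat).
  { rewrite length_xorl, length_pcA, HL; lia. }
  pose proof (pair_unique k _ z false HLx Hb Hall) as U.
  assert (EC : xorl (pcA k a) B' = cZ k z).
  { apply nth_ext with false false; [rewrite HLx, length_cZ; auto|].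
    intros i Hi. rewrite HLx in Hi. rewrite U by auto. unfold cZ; rewrite nth_mk by auto.
    destruct (Nat.odd i), (z (Nat.div2 i)); auto. }
  assert (EB : B' = Bv k a z).
  { apply xorl_solve in EC; [|rewrite length_pcA; auto]. rewrite EC.
    rewrite <- (xorl_pcA_Bv k a z), xorl_inv; auto. rewrite length_pcA, length_Bv; auto. }
  assert (Em' : m = tgt k a z) by (rewrite Em, EB; reflexivity).
  exists (tgt k a (togn j z)). split; [split; [apply H_tgt|split]|].
  - intros p Hp. unfold Tr, SA in Hp. destruct (in_Tr _ k z j p Hp) as [j' [H1 [H2 ->]]]; simpl.
    rewrite !tgt_at by auto. rewrite togn_neq by auto. rewrite xorb_nilpotent. reflexivity.
  - intros h' H' C'. specialize (Mm h' H' C'). rewrite Em' in Mm. fold r in Hle. lra.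
  - unfold r. rewrite tgt_at by auto. rewrite togn_eq. destruct (z j); simpl; congruence.
Qed.

Lemma failB psi k a z j : (2 <= k)%nat -> (j < k)%nat ->
  psi (tgt k (togn j a) (togn j z)) (pp j (negb (z j))) <= psi (tgt k a z) (pp j (negb (z j))) ->
  AlgP psi (label (tgt k a z) (remove_nth j (SB k z))) (pp j (negb (z j))) <> tgt k a z (pp j (negb (z j))).
Proof.
  intros Hk Hj Hle.
  set (Tr := label (tgt k a z) (remove_nth j (SB k z))).
  set (r := pp j (negb (z j))).
  assert (Hy : tgt k a z r = (true, Bv k a z)).
  { unfold r; rewrite tgt_at by auto; destruct (z j); auto. }
  assert (Hhd : snd (hd d0 Tr) = (true, Bv k a z)).
  { apply (hd_Tr _ k (fun j => negb (z j))); auto. intros j' H1 H2. rewrite tgt_at by auto; destruct (z j'); auto. }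
  rewrite Hy, <- Hhd. apply AlgP_wrong. rewrite Hhd.
  assert (Hcov : forall h, H_OTP h -> consistent Tr h ->
             In h (map (fun A' => h_AB A' (Bv k a z)) (blists (2*k)))).
  { intros h Hh Hc. destruct (vsB k a z j h Hk Hj Hh Hc) as [A' [HL [_ [-> _]]]].
    apply (in_map (fun A' => h_AB A' (Bv k a z))). rewrite <- HL. apply in_blists. }
  destruct (in_argmin_of psi Tr r _ Hcov) as [m Hm].
  { exists (tgt k a z); split; [apply H_tgt | apply consistent_label]. }
  destruct (Y_eq_dec (m r) (true, Bv k a z)) as [Er|Nr]; [|exists m; auto].
  destruct Hm as [Hm [Cm Mm]].
  destruct (vsB k a z j m Hk Hj Hm Cm) as [A' [HL [Hb [Em Hz]]]].
  assert (Hr : nth r (xorl A' (Bv k a z)) false = true).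
  { rewrite Em in Er. apply hAB_true in Er as [_ E].
    rewrite HL, Nat.mod_small in E by (apply pp_lt; auto). auto. }
  assert (Hall : forall j', (j' < k)%nat -> nth (2*j' + Nat.b2n ((fun j => negb (z j)) j')) (xorl A' (Bv k a z)) false = true).
  { intros j' H1. destruct (Nat.eq_dec j' j) as [->|ne]; [exact Hr|]. apply Hz; auto. }
  assert (HLx : length (xorl A' (Bv k a z)) = (2*k)%nat).
  { rewrite length_xorl, length_Bv, HL; lia. }
  pose proof (pair_unique k _ _ true HLx Hb Hall) as U.
  assert (EC : xorl A' (Bv k a z) = cZ k z).
  { apply nth_ext with false false; [rewrite HLx, length_cZ; auto|].
    intros i Hi. rewrite HLx in Hi. rewrite U by auto. unfold cZ; rewrite nth_mk by auto.
    destruct (Nat.odd i), (z (Nat.div2 i)); auto. }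
  assert (EA : A' = pcA k a).
  { rewrite xorl_comm in EC. apply xorl_solve in EC; [|rewrite length_Bv; auto]. rewrite EC.
    pose proof (xorl_pcA_Bv k a z) as E2. rewrite xorl_comm in E2.
    apply xorl_solve in E2; [|rewrite length_Bv, length_pcA; auto]. auto. }
  assert (Em' : m = tgt k a z) by (rewrite Em, EA; reflexivity).
  exists (tgt k (togn j a) (togn j z)). split; [split; [apply H_tgt|split]|].
  - intros p Hp. unfold Tr, SB in Hp.
    destruct (in_Tr _ k (fun j => negb (z j)) j p Hp) as [j' [H1 [H2 ->]]]; simpl.
    rewrite !tgt_at by auto. rewrite togn_neq by auto. rewrite Bv_tog. destruct (z j'); reflexivity.
  - intros h' H' C'. specialize (Mm h' H' C'). rewrite Em' in Mm. fold r in Hle. lra.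
  - unfold r. rewrite tgt_at by auto. rewrite togn_eq. destruct (z j); simpl; congruence.
Qed.

Definition fr (f : nat -> bool) (k : nat) : nat :=
  fold_right (fun i acc => ((if f i then 1 else 0) + acc)%nat) 0%nat (seq 0 k).

Lemma fr_S f k : fr f (S k) = (fr f k + (if f k then 1 else 0))%nat.
Proof.
  unfold fr. rewrite seq_S, fold_right_app. simpl.
  generalize (if f k then 1%nat else 0%nat). intros c.
  induction (seq 0 k); simpl; lia.
Qed.

Module Comb.
Import ssreflect ssrfun ssrbool eqtype ssrnat seq fintype finfun bigop.
From mathcomp Require Import zify.
Local Open Scope nat_scope.
Definition tog k (j : 'I_k) (a : {ffun 'I_k -> bool}) : {ffun 'I_k -> bool} :=
  [ffun i => if i == j then ~~ a i else a i].
Arguments tog {k}.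

Lemma togK k (j : 'I_k) : involutive (@tog k j).
Proof. move=> a; apply/ffunP => i; rewrite !ffunE; case: (i == j) => //; by rewrite negbK. Qed.
Arguments togK {k}.

Lemma sum_tog k (j : 'I_k) (F : {ffun 'I_k -> bool} -> nat) :
  \sum_(a : {ffun 'I_k -> bool}) F (tog j a) = \sum_(a : {ffun 'I_k -> bool}) F a.
Proof.
by rewrite [RHS](reindex_inj (can_inj (togK j))).
Qed.
Arguments sum_tog {k}.

Lemma comb k (fa fb : {ffun 'I_k -> bool} -> {ffun 'I_k -> bool} -> 'I_k -> bool) :
  (forall a z j, [|| fa a z j, fb a (tog j z) j, fa (tog j a) z j | fb (tog j a) (tog j z) j]) ->
  exists a z, k <= 4 * \sum_(j < k) fa a z j \/ k <= 4 * \sum_(j < k) fb a z j.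
Proof.
move=> H.
pose T (f : {ffun 'I_k -> bool} -> {ffun 'I_k -> bool} -> 'I_k -> bool) :=
   \sum_(j < k) \sum_(a : {ffun 'I_k -> bool}) \sum_(z : {ffun 'I_k -> bool}) (f a z j : nat).
set N := \sum_(a : {ffun 'I_k -> bool}) \sum_(z : {ffun 'I_k -> bool}) 1.
have key : k * N <= 2 * (T fa + T fb).
  have E1 : k * N = \sum_(j < k) \sum_(a : {ffun 'I_k -> bool}) \sum_(z : {ffun 'I_k -> bool}) 1.
    by rewrite sum_nat_const card_ord.
  rewrite E1.
  have E2 : \sum_(j < k) \sum_(a : {ffun 'I_k -> bool}) \sum_(z : {ffun 'I_k -> bool}) 1 <=
     \sum_(j < k) \sum_(a : {ffun 'I_k -> bool}) \sum_(z : {ffun 'I_k -> bool})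
       ((fa a z j : nat) + fb a (tog j z) j + fa (tog j a) z j + fb (tog j a) (tog j z) j).
    apply: leq_sum => j _; apply: leq_sum => a _; apply: leq_sum => z _.
    move: (H a z j); case: (fa a z j); case: (fb a (tog j z) j); case: (fa (tog j a) z j);
      case: (fb (tog j a) (tog j z) j) => //.
  apply: (leq_trans E2); rewrite /T mul2n -addnn.
  rewrite -!big_split /=; apply: eq_leq; apply: eq_bigr => j _.
  under eq_bigr => a _ do rewrite !big_split.
  rewrite !big_split /=.
  have -> : \sum_(a : {ffun 'I_k -> bool}) \sum_(z : {ffun 'I_k -> bool}) (fb a (tog j z) j : nat)
     = \sum_(a : {ffun 'I_k -> bool}) \sum_(z : {ffun 'I_k -> bool}) (fb a z j : nat).
    by apply: eq_bigr => a _; rewrite (sum_tog j (fun z => (fb a z j : nat))).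
  have -> : \sum_(a : {ffun 'I_k -> bool}) \sum_(z : {ffun 'I_k -> bool}) (fa (tog j a) z j : nat)
     = \sum_(a : {ffun 'I_k -> bool}) \sum_(z : {ffun 'I_k -> bool}) (fa a z j : nat).
    by rewrite (sum_tog j (fun a => \sum_(z : {ffun 'I_k -> bool}) (fa a z j : nat))).
  have -> : \sum_(a : {ffun 'I_k -> bool}) \sum_(z : {ffun 'I_k -> bool}) (fb (tog j a) (tog j z) j : nat)
     = \sum_(a : {ffun 'I_k -> bool}) \sum_(z : {ffun 'I_k -> bool}) (fb a z j : nat).
    rewrite (sum_tog j (fun a => \sum_(z : {ffun 'I_k -> bool}) (fb a (tog j z) j : nat))).
    by apply: eq_bigr => a _; rewrite (sum_tog j (fun z => (fb a z j : nat))).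
  set x1 := \sum_(a : {ffun 'I_k -> bool}) \sum_(z : {ffun 'I_k -> bool}) (fa a z j : nat).
  set x2 := \sum_(a : {ffun 'I_k -> bool}) \sum_(z : {ffun 'I_k -> bool}) (fb a z j : nat).
  by rewrite -!addnA.
have Npos : 0 < N.
  rewrite /N.
  have -> : \sum_(a : {ffun 'I_k -> bool}) \sum_(z : {ffun 'I_k -> bool}) 1 = #|{ffun 'I_k -> bool}| * #|{ffun 'I_k -> bool}|.
    rewrite sum_nat_const; congr (_ * _); by rewrite sum1_card.
  by rewrite card_ffun muln_gt0 expn_gt0 card_bool.
apply: Classical_Prop.NNPP => Hn.
have per : forall a z, 2 * (\sum_(j < k) (fa a z j : nat) + \sum_(j < k) (fb a z j : nat)) + 1 <= k.
  move=> a z.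
  have h1 : ~ (k <= 4 * \sum_(j < k) (fa a z j : nat)) by move=> c; apply: Hn; exists a, z; left.
  have h2 : ~ (k <= 4 * \sum_(j < k) (fb a z j : nat)) by move=> c; apply: Hn; exists a, z; right.
  move: h1 h2; generalize (\sum_(j < k) (fa a z j : nat)) (\sum_(j < k) (fb a z j : nat)) => x y h1 h2.
  move/negP: h1; move/negP: h2; rewrite -!ltnNge => h2 h1; lia.
have tot : 2 * (T fa + T fb) + N <= k * N.
  have e : forall f, T f = \sum_(a : {ffun 'I_k -> bool}) \sum_(z : {ffun 'I_k -> bool}) \sum_(j < k) (f a z j : nat).
    move=> f; rewrite /T exchange_big /=; apply: eq_bigr => a _; by rewrite exchange_big.
  rewrite !e.
  have L : \sum_(a : {ffun 'I_k -> bool}) \sum_(z : {ffun 'I_k -> bool}) (2 * (\sum_(j < k) (fa a z j : nat) + \sum_(j < k) (fb a z j : nat)) + 1)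
      <= \sum_(a : {ffun 'I_k -> bool}) \sum_(z : {ffun 'I_k -> bool}) k.
    apply: leq_sum => a _; apply: leq_sum => z _; exact: per.
  have R : \sum_(a : {ffun 'I_k -> bool}) \sum_(z : {ffun 'I_k -> bool}) k = k * N.
    rewrite /N big_distrr; apply: eq_bigr => a _; rewrite big_distrr; apply: eq_bigr => z _; symmetry; exact: muln1.
  rewrite -R; apply: leq_trans L; apply: eq_leq.
  rewrite /N mulnDr !big_distrr -!big_split /=; apply: eq_bigr => a _.
  rewrite !big_distrr -!big_split /=; apply: eq_bigr => z _.
  by rewrite mulnDr.
move: key tot Npos; generalize (T fa) (T fb) N => x y n; lia.
Qed.

Definition tofun k (a : {ffun 'I_k -> bool}) : nat -> bool :=
  fun i => match (insub i : option 'I_k) with Some o => a o | None => false end.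
Arguments tofun {k}.

Lemma tofun_tog k (j : 'I_k) a : tofun (tog j a) = togn j (tofun a).
Proof.
  apply: functional_extensionality => i; rewrite /tofun /togn.
  case: insubP => [o Hi Ho | Hi].
  - rewrite ffunE. case: (o =P j) => [Eo|ne]; case: Nat.eqb_spec => E //.
    + exfalso; apply: E. by rewrite -Ho Eo.
    + exfalso; apply: ne. apply: val_inj. by rewrite /= Ho E.
  - case: Nat.eqb_spec => E //. exfalso. move: Hi. by rewrite E ltn_ord.
Qed.

Lemma sum_fr k (f : nat -> bool) : \sum_(j < k) (f j : nat) = fr f k.
Proof.
  elim: k => [|k IH]; first by rewrite big_ord0.
  rewrite big_ord_recr /= IH fr_S. by case: (f k).
Qed.

Lemma comb_nat k (fa fb : (nat -> bool) -> (nat -> bool) -> nat -> bool) :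
  (forall a z j, Peano.lt j k -> fa a z j = true \/ fb a (togn j z) j = true \/
      fa (togn j a) z j = true \/ fb (togn j a) (togn j z) j = true) ->
  exists a z, Peano.le k (Nat.mul 4 (fr (fa a z) k)) \/ Peano.le k (Nat.mul 4 (fr (fb a z) k)).
Proof.
  move=> H.
  have := @comb k (fun a z j => fa (tofun a) (tofun z) j) (fun a z j => fb (tofun a) (tofun z) j).
  case.
  - move=> a z j. rewrite !tofun_tog.
    have := H (tofun a) (tofun z) j (ltP (ltn_ord j)).
    by case=> [->|[->|[->|->]]]; rewrite ?orbT.
  - move=> a [z Hz]. exists (tofun a), (tofun z).
    rewrite -!sum_fr. case: Hz => Hz; [left|right]; apply/leP; exact: Hz.
Qed.
End Comb.

Lemma fold_ext (f g : nat -> nat) l : (forall i, f i = g i) ->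
  fold_right (fun i acc => (f i + acc)%nat) 0%nat l = fold_right (fun i acc => (g i + acc)%nat) 0%nat l.
Proof. intros H; induction l; simpl; [reflexivity | rewrite H, IHl; reflexivity]. Qed.

Definition fA psi k a z i : bool :=
  if Y_eq_dec (AlgP psi (label (tgt k a z) (remove_nth i (SA k z))) (nth i (SA k z) 0%nat))
              (tgt k a z (nth i (SA k z) 0%nat)) then false else true.
Definition fB psi k a z i : bool :=
  if Y_eq_dec (AlgP psi (label (tgt k a z) (remove_nth i (SB k z))) (nth i (SB k z) 0%nat))
              (tgt k a z (nth i (SB k z) 0%nat)) then false else true.

Lemma mistakes_A psi k a z : trans_mistakes (AlgP psi) (SA k z) (tgt k a z) = fr (fA psi k a z) k.
Proof.
  unfold trans_mistakes, fr. rewrite length_SA. apply fold_ext. intros i.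
  unfold fA. destruct (Y_eq_dec _ _); auto.
Qed.
Lemma mistakes_B psi k a z : trans_mistakes (AlgP psi) (SB k z) (tgt k a z) = fr (fB psi k a z) k.
Proof.
  unfold trans_mistakes, fr. rewrite length_SB. apply fold_ext. intros i.
  unfold fB. destruct (Y_eq_dec _ _); auto.
Qed.

Lemma fA_true psi k a z j : (2 <= k)%nat -> (j < k)%nat ->
  psi (tgt k a (togn j z)) (pp j (z j)) <= psi (tgt k a z) (pp j (z j)) -> fA psi k a z j = true.
Proof.
  intros Hk Hj Hle. unfold fA. rewrite nth_SA by auto.
  destruct (Y_eq_dec _ _) as [e|]; auto. exfalso; exact (failA psi k a z j Hk Hj Hle e).
Qed.
Lemma fB_true psi k a z j : (2 <= k)%nat -> (j < k)%nat ->
  psi (tgt k (togn j a) (togn j z)) (pp j (negb (z j))) <= psi (tgt k a z) (pp j (negb (z j))) ->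
  fB psi k a z j = true.
Proof.
  intros Hk Hj Hle. unfold fB. rewrite nth_SB by auto.
  destruct (Y_eq_dec _ _) as [e|]; auto. exfalso; exact (failB psi k a z j Hk Hj Hle e).
Qed.

Lemma cycle psi k a z j : (2 <= k)%nat -> (j < k)%nat ->
  fA psi k a z j = true \/ fB psi k a (togn j z) j = true \/
  fA psi k (togn j a) z j = true \/ fB psi k (togn j a) (togn j z) j = true.
Proof.
  intros Hk Hj.
  set (r := pp j (z j)).
  set (v0 := psi (tgt k a z) r). set (v1 := psi (tgt k a (togn j z)) r).
  set (v2 := psi (tgt k (togn j a) z) r). set (v3 := psi (tgt k (togn j a) (togn j z)) r).
  destruct (Rle_dec v1 v0) as [l0|l0]; [left; apply fA_true; auto|].
  destruct (Rle_dec v2 v1) as [l1|l1].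
  { right; left. apply fB_true; auto. rewrite togn_eq, negb_involutive, togn_invol. exact l1. }
  destruct (Rle_dec v3 v2) as [l2|l2].
  { right; right; left. apply fA_true; auto. }
  destruct (Rle_dec v0 v3) as [l3|l3].
  { right; right; right. apply fB_true; auto. rewrite togn_eq, negb_involutive, !togn_invol. exact l3. }
  exfalso. lra.
Qed.

Lemma negative_part : ~ (exists psi : (X -> Y) -> X -> R,
       local_regularizer H_OTP psi /\ psi_trans_learns H_OTP psi).
Proof.
  intros [psi [_ Hl]]. destruct (Hl (AlgP psi) (AlgP_induced psi)) as [m Hm].
  set (k := Nat.max 2 (m (1/5))).
  assert (Hk : (2 <= k)%nat) by (unfold k; lia).
  assert (Hkm : (m (1/5)%R <= k)%nat) by (unfold k; lia).
  destruct (Comb.comb_nat k (fA psi k) (fB psi k)) as [a [z Hz]].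
  { intros a z j Hj. apply cycle; auto. }
  assert (Heps : 0 < 1/5 < 1) by lra.
  assert (Kpos : 0 < INR k) by (apply lt_0_INR; lia).
  destruct Hz as [Hz|Hz].
  - pose proof (Hm (1/5) Heps (tgt k a z) (H_tgt k a z) (SA k z) ltac:(rewrite length_SA; auto)) as E.
    unfold trans_error in E. rewrite mistakes_A, length_SA in E.
    apply le_INR in Hz. rewrite mult_INR in Hz. simpl in Hz.
    apply (Rmult_le_compat_r (INR k)) in E; [|lra].
    unfold Rdiv in E. rewrite Rmult_assoc, Rinv_l in E by lra. lra.
  - pose proof (Hm (1/5) Heps (tgt k a z) (H_tgt k a z) (SB k z) ltac:(rewrite length_SB; auto)) as E.
    unfold trans_error in E. rewrite mistakes_B, length_SB in E.
    apply le_INR in Hz. rewrite mult_INR in Hz. simpl in Hz.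
    apply (Rmult_le_compat_r (INR k)) in E; [|lra].
    unfold Rdiv in E. rewrite Rmult_assoc, Rinv_l in E by lra. lra.
Qed.

Section FS.
Context {T : Type}.

Lemma fsum_nil (f : T -> R) : fsum f [] = 0. Proof. reflexivity. Qed.
Lemma fsum_cons (f : T -> R) a l : fsum f (a :: l) = f a + fsum f l. Proof. reflexivity. Qed.

Lemma fsum_app (f : T -> R) l1 l2 : fsum f (l1 ++ l2) = fsum f l1 + fsum f l2.
Proof. induction l1; simpl; [lra|]. unfold fsum in *; simpl in *. rewrite IHl1; lra. Qed.

Lemma fsum_nonneg (f : T -> R) l : (forall z, 0 <= f z) -> 0 <= fsum f l.
Proof. intros H; induction l; unfold fsum in *; simpl; [lra|]. specialize (H a); lra. Qed.

Lemma fsum_le (f g : T -> R) l : (forall z, In z l -> f z <= g z) -> fsum f l <= fsum g l.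
Proof.
  induction l; intros H; unfold fsum in *; simpl; [lra|].
  assert (f a <= g a) by (apply H; simpl; auto).
  assert (fold_right (fun x acc => f x + acc) 0 l <= fold_right (fun x acc => g x + acc) 0 l)
    by (apply IHl; intros; apply H; simpl; auto).
  lra.
Qed.

Lemma fsum_ext (f g : T -> R) l : (forall z, In z l -> f z = g z) -> fsum f l = fsum g l.
Proof. intros H; apply Rle_antisym; apply fsum_le; intros z Hz; rewrite (H z Hz); lra. Qed.

Lemma fsum_plus (f g : T -> R) l : fsum (fun z => f z + g z) l = fsum f l + fsum g l.
Proof. induction l; unfold fsum in *; simpl; [lra|]. rewrite IHl; lra. Qed.

Lemma fsum_scal (f : T -> R) c l : fsum (fun z => c * f z) l = c * fsum f l.
Proof. induction l; unfold fsum in *; simpl; [lra|]. rewrite IHl; lra. Qed.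

Lemma fsum_filter (f : T -> R) (P : T -> bool) l :
  fsum f (filter P l) = fsum (fun z => if P z then f z else 0) l.
Proof.
  induction l as [|a l IH]; [reflexivity|]. cbn [filter]. rewrite (fsum_cons _ a l); cbv beta.
  destruct (P a); [rewrite fsum_cons|]; rewrite IH; lra.
Qed.

Lemma sub_fsum (f : T -> R) L M : (forall z, 0 <= f z) -> NoDup L -> incl L M -> fsum f L <= fsum f M.
Proof.
  intros Hf; revert M; induction L as [|a L IH]; intros M HN Hi.
  - simpl. apply fsum_nonneg; auto.
  - assert (Ha : In a M) by (apply Hi; simpl; auto).
    apply in_split in Ha as [M1 [M2 ->]].
    inversion HN; subst.
    assert (Hi' : incl L (M1 ++ M2)).
    { intros x Hx. assert (Hx' : In x (M1 ++ a :: M2)) by (apply Hi; simpl; auto).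
      apply in_app_or in Hx'. apply in_or_app. destruct Hx' as [?|[<-|?]]; auto; contradiction. }
    specialize (IH _ H2 Hi'). rewrite fsum_app in *. rewrite !fsum_cons. lra.
Qed.

Lemma prob_ub (w : T -> R) E v L : prob w E v -> NoDup L -> (forall z, In z L -> E z) -> fsum w L <= v.
Proof. intros [Hub _] HN HE. apply Hub. exists L; auto. Qed.

Lemma prob_least (w : T -> R) E v c : prob w E v ->
  (forall L, NoDup L -> (forall z, In z L -> E z) -> fsum w L <= c) -> v <= c.
Proof. intros [_ Hl] H. apply Hl. intros r [L [HN [HE ->]]]. apply H; auto. Qed.

Lemma prob_exists (w : T -> R) E M :
  (forall L, NoDup L -> (forall z, In z L -> E z) -> fsum w L <= M) -> exists v, prob w E v.
Proof.
  intros H.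
  destruct (completeness (fun r => exists l : list T, NoDup l /\ (forall z, In z l -> E z) /\ r = fsum w l))
    as [v Hv].
  - exists M. intros r [L [HN [HE ->]]]. apply H; auto.
  - exists 0. exists []. split; [constructor|]. split; [intros z []|reflexivity].
  - exists v; exact Hv.
Qed.

Lemma prob_ext (w : T -> R) (E E' : T -> Prop) v : (forall z, E z <-> E' z) -> prob w E v -> prob w E' v.
Proof.
  intros H [Hub Hl]. split.
  - intros r [L [HN [HE ->]]]. apply Hub. exists L. split; auto. split; auto. intros z Hz; apply H; auto.
  - intros b Hb. apply Hl. intros r [L [HN [HE ->]]]. apply Hb. exists L. split; auto. split; auto.
    intros z Hz; apply H; auto.
Qed.

End FS.

Fixpoint tuples {T} (n : nat) (F : list T) : list (list T) :=
  match n with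
  | O => [[]]
  | S n => flat_map (fun z => map (cons z) (tuples n F)) F
  end.

Lemma fsum_flat_map {T U} (f : U -> R) (G : T -> list U) l :
  fsum f (flat_map G l) = fsum (fun z => fsum f (G z)) l.
Proof. induction l; cbn [flat_map]; [reflexivity|]. rewrite fsum_app, fsum_cons, IHl; reflexivity. Qed.

Lemma fsum_map {T U} (f : U -> R) (h : T -> U) l : fsum f (map h l) = fsum (fun z => f (h z)) l.
Proof. induction l; cbn [map]; [reflexivity|]. rewrite !fsum_cons, IHl; reflexivity. Qed.

Definition prodw {T} (g : T -> R) (S : list T) : R := fold_right (fun z acc => g z * acc) 1 S.

Lemma fsum_tuples {T} (g : T -> R) n F : fsum (prodw g) (tuples n F) = (fsum g F) ^ n.
Proof.
  induction n; cbn [tuples pow].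
  - unfold fsum, prodw; simpl. lra.
  - rewrite fsum_flat_map.
    transitivity (fsum (fun z => (fsum g F) ^ n * g z) F).
    + apply fsum_ext. intros z _. rewrite fsum_map.
      transitivity (fsum (fun S => g z * prodw g S) (tuples n F)); [apply fsum_ext; reflexivity|].
      rewrite fsum_scal, IHn. lra.
    + rewrite fsum_scal. lra.
Qed.

Lemma in_tuples {T} n (F : list T) S : length S = n -> (forall z, In z S -> In z F) -> In S (tuples n F).
Proof.
  revert S; induction n; intros S HL HF; destruct S as [|a S]; simpl in *; try lia; auto.
  apply in_flat_map. exists a. split; [apply HF; auto|]. apply in_map. apply IHn; auto.
Qed.

Lemma in_tuples_inv {T} n (F : list T) S : In S (tuples n F) -> length S = n /\ (forall z, In z S -> In z F).
Proof.
  revert S; induction n; intros S HS; simpl in HS.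
  - destruct HS as [<-|[]]. split; auto. intros z [].
  - apply in_flat_map in HS as [a [Ha HS]]. apply in_map_iff in HS as [S' [<- HS']].
    destruct (IHn _ HS') as [H1 H2]. split; simpl; [lia|]. intros z [<-|Hz]; auto.
Qed.

Lemma nodup_map_cons {T} (a : T) l : NoDup l -> NoDup (map (cons a) l).
Proof.
  induction l; intros H; simpl; constructor; inversion H; subst; auto.
  intros Hin. apply in_map_iff in Hin as [x [E Hx]]. inversion E; subst; contradiction.
Qed.

Lemma nodup_flat_map {T U} (G : T -> list U) F :
  NoDup F -> (forall z, NoDup (G z)) -> (forall z1 z2 x, In x (G z1) -> In x (G z2) -> z1 = z2) ->
  NoDup (flat_map G F).
Proof.
  intros HF HG Hd; induction F as [|a F IH]; simpl; [constructor|].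
  inversion HF; subst. apply NoDup_app; auto.
  intros x Hx Hx'. apply in_flat_map in Hx' as [b [Hb Hx']].
  rewrite (Hd _ _ _ Hx Hx') in H1. contradiction.
Qed.

Lemma nodup_tuples {T} n (F : list T) : NoDup F -> NoDup (tuples n F).
Proof.
  intros HF; induction n; simpl.
  - constructor; [intros []|constructor].
  - apply nodup_flat_map; auto.
    + intros z; apply nodup_map_cons; auto.
    + intros z1 z2 x H1 H2. apply in_map_iff in H1 as [y1 [<- _]].
      apply in_map_iff in H2 as [y2 [E _]]. inversion E; auto.
Qed.

Definition find_lab (b : bool) (S : trainset) : option (list bool) :=
  match find (fun p => Bool.eqb (fst (snd p)) b) S with
  | Some p => Some (snd (snd p)) | None => None end.

Definition Alg0 : learner := fun S x =>
  match find_lab false S, find_lab true S with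
  | Some A, Some B => h_AB A B x
  | _, _ => snd (hd d0 S)
  end.

Lemma hAB_cases A B y : h_AB A B y = (false, A) \/ h_AB A B y = (true, B).
Proof. unfold h_AB; destruct (nth _ _ _); auto. Qed.

Lemma find_lab_val A B S b L :
  (forall p, In p S -> h_AB A B (fst p) = snd p) ->
  find_lab b S = Some L -> L = if b then B else A.
Proof.
  intros Hc. unfold find_lab.
  destruct (find (fun p => Bool.eqb (fst (snd p)) b) S) as [p|] eqn:E; [|discriminate].
  intros EL; inversion EL; subst L.
  apply find_some in E as [Hp Eb]. apply Bool.eqb_prop in Eb.
  pose proof (Hc _ Hp) as Hy. destruct p as [x [c l]]; simpl in *. subst c.
  destruct (hAB_cases A B x) as [F|F]; rewrite F in Hy; inversion Hy; auto.
Qed.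

Lemma find_lab_none S b : find_lab b S = None -> forall p, In p S -> fst (snd p) = negb b.
Proof.
  unfold find_lab. destruct (find (fun p => Bool.eqb (fst (snd p)) b) S) eqn:E; [discriminate|]. intros _ p Hp.
  pose proof (find_none _ _ E p Hp) as F. destruct p as [x [c l]]; simpl in *. destruct c, b; simpl in *; congruence.
Qed.

Lemma Alg0_correct A B S x :
  (forall p, In p S -> h_AB A B (fst p) = snd p) ->
  (exists p, In p S /\ fst (snd p) = fst (h_AB A B x)) ->
  Alg0 S x = h_AB A B x.
Proof.
  intros Hc [p0 [Hp0 Hb0]]. unfold Alg0.
  assert (Hhd : In (hd d0 S) S) by (destruct S; simpl in *; auto).
  destruct (find_lab false S) as [A'|] eqn:E0; destruct (find_lab true S) as [B'|] eqn:E1.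
  - apply (find_lab_val A B) in E0; apply (find_lab_val A B) in E1; auto. subst; auto.
  - pose proof (find_lab_none _ _ E1 _ Hhd) as F1. pose proof (find_lab_none _ _ E1 _ Hp0) as F2.
    rewrite <- (Hc _ Hhd) in *. rewrite Hb0 in F2.
    destruct (hAB_cases A B x) as [F|F]; rewrite F in *; simpl in *; [|discriminate].
    destruct (hAB_cases A B (fst (hd d0 S))) as [G|G]; rewrite G in *; simpl in *; auto; discriminate.
  - pose proof (find_lab_none _ _ E0 _ Hhd) as F1. pose proof (find_lab_none _ _ E0 _ Hp0) as F2.
    rewrite <- (Hc _ Hhd) in *. rewrite Hb0 in F2.
    destruct (hAB_cases A B x) as [F|F]; rewrite F in *; simpl in *; [discriminate|].
    destruct (hAB_cases A B (fst (hd d0 S))) as [G|G]; rewrite G in *; simpl in *; auto; discriminate.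
  - pose proof (find_lab_none _ _ E0 _ Hp0) as F1. pose proof (find_lab_none _ _ E1 _ Hp0) as F2.
    rewrite F1 in F2; discriminate.
Qed.

Definition sumf (g : nat -> nat) n := fold_right (fun i acc => (g i + acc)%nat) 0%nat (seq 0 n).

Lemma fold_shift (g : nat -> nat) s n :
  fold_right (fun i acc => (g i + acc)%nat) 0%nat (seq (S s) n) =
  fold_right (fun i acc => (g (S i) + acc)%nat) 0%nat (seq s n).
Proof. revert s; induction n; intros s; simpl; [reflexivity|]. rewrite IHn; reflexivity. Qed.

Lemma sumf_S0 g n : sumf g (S n) = (g 0%nat + sumf (fun i => g (S i)) n)%nat.
Proof. unfold sumf; simpl. rewrite fold_shift; auto. Qed.

Lemma sumf_le_gen (g g' : nat -> nat) s n : (forall i, (s <= i < s + n)%nat -> (g i <= g' i)%nat) ->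
  (fold_right (fun i acc => (g i + acc)%nat) 0%nat (seq s n) <= fold_right (fun i acc => (g' i + acc)%nat) 0%nat (seq s n))%nat.
Proof.
  revert s; induction n; intros s H; simpl; auto.
  pose proof (H s ltac:(lia)). pose proof (IHn (S s) ltac:(intros; apply H; lia)). lia.
Qed.

Lemma sumf_le g g' n : (forall i, (i < n)%nat -> (g i <= g' i)%nat) -> (sumf g n <= sumf g' n)%nat.
Proof. intros H; apply sumf_le_gen; intros; apply H; lia. Qed.

Lemma sumf_plus g g' n : sumf (fun i => g i + g' i)%nat n = (sumf g n + sumf g' n)%nat.
Proof.
  unfold sumf. generalize (seq 0 n). intros l; induction l; simpl; [reflexivity|]. rewrite IHl; lia.
Qed.

Definition Wt (t : bool) (T : list bool) : nat :=
  sumf (fun i => if bool_dec (nth i T false) t then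
                   (if in_dec bool_dec t (remove_nth i T) then 0 else 1) else 0)%nat (length T).

Lemma Wt_le1 t T : (Wt t T <= 1)%nat.
Proof.
  induction T as [|b T IH]; unfold Wt in *; simpl length; [unfold sumf; simpl; lia|].
  rewrite sumf_S0. simpl nth. simpl remove_nth.
  destruct (bool_dec b t) as [->|ne].
  - assert (Z : (sumf (fun i => if bool_dec (nth i T false) t then
                   (if in_dec bool_dec t (t :: remove_nth i T) then 0 else 1) else 0)%nat (length T) <= sumf (fun _ => 0%nat) (length T))%nat).
    { apply sumf_le. intros i _. destruct (bool_dec _ _); [|lia].
      destruct (in_dec bool_dec t (t :: remove_nth i T)) as [|n]; [lia|]. exfalso; apply n; simpl; auto. }
    assert (Z0 : sumf (fun _ => 0%nat) (length T) = 0%nat).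
    { unfold sumf. generalize (seq 0 (length T)). intros l; induction l; simpl; auto. }
    destruct (in_dec bool_dec t T); lia.
  - assert (Z : (sumf (fun i => if bool_dec (nth i T false) t then
                   (if in_dec bool_dec t (b :: remove_nth i T) then 0 else 1) else 0)%nat (length T) <=
             sumf (fun i => if bool_dec (nth i T false) t then
                   (if in_dec bool_dec t (remove_nth i T) then 0 else 1) else 0)%nat (length T))%nat).
    { apply sumf_le. intros i _. destruct (bool_dec _ _); [|lia].
      destruct (in_dec bool_dec t (b :: remove_nth i T)) as [i1|i1];
      destruct (in_dec bool_dec t (remove_nth i T)) as [i2|i2]; try lia.
      exfalso. apply i1; right; auto. }
    lia.
Qed.

Lemma mistakes_le2 A B S :
  (trans_mistakes Alg0 S (h_AB A B) <= 2)%nat.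
Proof.
  set (h := h_AB A B).
  set (T := map (fun y => fst (h y)) S).
  assert (E : trans_mistakes Alg0 S h =
     sumf (fun i => if Y_eq_dec (Alg0 (label h (remove_nth i S)) (nth i S 0%nat)) (h (nth i S 0%nat)) then 0 else 1)%nat (length S))
    by reflexivity.
  rewrite E.
  assert (LT : length T = length S) by (unfold T; rewrite length_map; auto).
  pose proof (Wt_le1 true T). pose proof (Wt_le1 false T).
  unfold Wt in *. rewrite LT in *.
  match goal with |- (?a <= _)%nat => assert (a <= sumf (fun i =>
       ((if bool_dec (nth i T false) true then if in_dec bool_dec true (remove_nth i T) then 0 else 1 else 0) +
        (if bool_dec (nth i T false) false then if in_dec bool_dec false (remove_nth i T) then 0 else 1 else 0))%nat) (length S))%nat end.
  2: { pose proof (sumf_plus (fun i => if bool_dec (nth i T false) true then if in_dec bool_dec true (remove_nth i T) then 0 else 1 else 0)%nat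
                     (fun i => if bool_dec (nth i T false) false then if in_dec bool_dec false (remove_nth i T) then 0 else 1 else 0)%nat (length S)).
       lia. }
  apply sumf_le. intros i Hi.
  destruct (Y_eq_dec _ _) as [ok|bad]; [lia|].
  set (x := nth i S 0%nat) in *.
  assert (Hn : nth i T false = fst (h x)).
  { unfold T, x. rewrite (nth_indep _ false (fst (h 0%nat))) by (rewrite length_map; auto).
    rewrite (map_nth (fun y => fst (h y))). reflexivity. }
  assert (Hnot : ~ In (fst (h x)) (remove_nth i T)).
  { intros Hin. apply bad. apply Alg0_correct.
    - intros p Hp. unfold label in Hp. apply in_map_iff in Hp as [y [<- _]]. reflexivity.
    - unfold T in Hin. rewrite remove_nth_map in Hin. apply in_map_iff in Hin as [y [Ey Hy]].
      exists (y, h y). split; [unfold label; apply (in_map (fun x => (x, h x))); auto | exact Ey]. }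
  rewrite Hn. destruct (fst (h x)).
  - destruct (bool_dec true true) as [_|c]; [|congruence].
    destruct (in_dec bool_dec true (remove_nth i T)); [contradiction|lia].
  - destruct (bool_dec false false) as [_|c]; [|congruence].
    destruct (in_dec bool_dec false (remove_nth i T)); [contradiction|lia].
Qed.

Definition m_trans (eps : R) : nat := Z.to_nat (up (2 / eps)).

Lemma trans_part : trans_learnable H_OTP.
Proof.
  exists Alg0, m_trans. intros eps Heps h [A [B [_ [_ ->]]]] S HS.
  pose proof (mistakes_le2 A B S) as Hm.
  destruct (archimed (2 / eps)) as [U1 _].
  assert (Hpos : 0 < 2 / eps) by (apply Rdiv_lt_0_compat; lra).
  assert (Hup : (0 <= up (2 / eps))%Z) by (apply le_IZR; lra).
  assert (HL : IZR (up (2 / eps)) <= INR (length S)).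
  { rewrite <- (Z2Nat.id _ Hup), <- INR_IZR_INZ. apply le_INR. exact HS. }
  assert (Lpos : 0 < INR (length S)) by lra.
  unfold trans_error. apply le_INR in Hm. simpl in Hm.
  apply (Rmult_le_reg_r (INR (length S))); auto.
  unfold Rdiv. rewrite Rmult_assoc, Rinv_l by lra.
  assert (2 < eps * INR (length S)).
  { assert (2 / eps * eps = 2) by (field; lra).
    apply Rmult_lt_compat_r with (r := eps) in U1; [|lra]. nra. }
  lra.
Qed.

Definition XY_dec : forall a b : X * Y, {a = b} + {a <> b}.
Proof. intros [x y] [x' y']. destruct (Nat.eq_dec x x'), (Y_eq_dec y y'); [left; congruence|right; congruence..]. Defined.

Lemma pow_le1 x n : 0 <= x <= 1 -> x ^ n <= 1.
Proof. intros H; induction n; simpl; [lra|]. pose proof (pow_le x n). nra. Qed.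

Lemma bernoulli x n : 0 <= x <= 1 -> 1 - INR n * x <= (1 - x) ^ n.
Proof.
  intros H; induction n; [simpl; lra|].
  rewrite S_INR. cbn [pow]. pose proof (pos_INR n). nra.
Qed.

Lemma prodw_nonneg {T} (g : T -> R) S : (forall z, 0 <= g z) -> 0 <= prodw g S.
Proof. intros H; induction S; unfold prodw in *; simpl; [lra|]. pose proof (H a); nra. Qed.

Lemma prodw_forall {T} (g : T -> R) (P : T -> bool) S :
  prodw g S * (if forallb P S then 1 else 0) = prodw (fun z => if P z then g z else 0) S.
Proof.
  induction S as [|a S IH]; unfold prodw in *; simpl; [lra|].
  destruct (P a); simpl; [rewrite <- IH; lra | lra].
Qed.

Section PAC.
Variable p : X * Y -> R.
Hypothesis Hp0 : forall z, 0 <= p z.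
Hypothesis Hp1 : prob p (fun _ => True) 1.
Variables A B : list bool.
Let hs := h_AB A B.
Hypothesis Hreal : prob p (fun z => hs (fst z) <> snd z) 0.
Variable eps : R.
Hypothesis Heps : 0 < eps < 1.

Lemma F1 L : NoDup L -> fsum p L <= 1.
Proof. intros H. apply (prob_ub p _ 1 L Hp1 H). auto. Qed.

Lemma F2 eta : 0 < eta -> exists L, NoDup L /\ 1 - eta < fsum p L.
Proof.
  intros He. apply NNPP. intros Hn.
  assert (1 <= 1 - eta); [|lra].
  apply (prob_least p _ 1 _ Hp1). intros L HN _.
  apply Rnot_lt_le. intros Hl. apply Hn. exists L; auto.
Qed.

Lemma F3 z : hs (fst z) <> snd z -> p z = 0.
Proof.
  intros H. pose proof (prob_ub p _ 0 [z] Hreal) as U.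
  assert (fsum p [z] <= 0) by (apply U; [constructor; [intros []|constructor] | intros z' [<-|[]]; auto]).
  unfold fsum in H0; simpl in H0. pose proof (Hp0 z). lra.
Qed.

Definition good (z : X * Y) : bool := if Y_eq_dec (hs (fst z)) (snd z) then true else false.
Definition typ (z : X * Y) : bool := fst (snd z).

Lemma fsum_good L : fsum p (filter good L) = fsum p L.
Proof.
  rewrite fsum_filter. apply fsum_ext. intros z _. unfold good.
  destruct (Y_eq_dec _ _); auto. rewrite F3; auto.
Qed.

Definition Q (b : bool) : Prop :=
  forall L, NoDup L -> (forall z, In z L -> typ z = b) -> fsum p L <= eps.

Lemma E_both S :
  (forall z, In z S -> good z = true) ->
  (exists z, In z S /\ typ z = true) -> (exists z, In z S /\ typ z = false) ->
  prob p (fun z => Alg0 S (fst z) <> snd z) 0.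
Proof.
  intros Hg [z1 [H1 T1]] [z0 [H0 T0]].
  assert (Hc : forall q, In q S -> h_AB A B (fst q) = snd q).
  { intros q Hq. specialize (Hg q Hq). unfold good in Hg. destruct (Y_eq_dec _ _); auto; discriminate. }
  apply (prob_ext p (fun z => hs (fst z) <> snd z)); auto.
  intros z. rewrite Alg0_correct with (A := A) (B := B); [tauto|auto|].
  destruct (fst (h_AB A B (fst z))); [exists z1 | exists z0]; auto.
Qed.

Lemma E_one S b :
  (forall z, In z S -> good z = true) -> S <> [] ->
  (forall z, In z S -> typ z = b) -> Q (negb b) ->
  exists e, prob p (fun z => Alg0 S (fst z) <> snd z) e /\ e <= eps.
Proof.
  intros Hg Hne Hb HQ.
  assert (Hc : forall q, In q S -> h_AB A B (fst q) = snd q).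
  { intros q Hq. specialize (Hg q Hq). unfold good in Hg. destruct (Y_eq_dec _ _); auto; discriminate. }
  destruct (prob_exists p (fun z => Alg0 S (fst z) <> snd z) 1) as [e He].
  { intros L HN _. apply F1; auto. }
  exists e. split; auto. apply (prob_least p _ e _ He). intros L HN HE.
  rewrite <- fsum_good. apply HQ; [apply NoDup_filter; auto|].
  intros z Hz. apply filter_In in Hz as [Hz Gz].
  specialize (HE z Hz). unfold good in Gz. destruct (Y_eq_dec _ _) as [Ez|]; [|discriminate].
  unfold typ. destruct (bool_dec (fst (snd z)) b) as [Tb|Tb].
  - exfalso. apply HE. rewrite Alg0_correct with (A := A) (B := B); auto.
    exists (hd d0 S). split; [destruct S; simpl; [congruence|auto]|].
    change (typ (hd d0 S) = fst (h_AB A B (fst z))). rewrite Hb by (destruct S; simpl; [congruence|auto]). unfold hs in Ez. rewrite Ez; auto.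
  - destruct (fst (snd z)), b; simpl in *; congruence.
Qed.


Lemma Bound1 LS n : NoDup LS -> (forall S, In S LS -> length S = n) -> fsum (sample_weight p) LS <= 1.
Proof.
  intros HN HL. set (F := nodup XY_dec (concat LS)).
  apply Rle_trans with (fsum (prodw p) (tuples n F)).
  - change (fsum (prodw p) LS <= fsum (prodw p) (tuples n F)).
    apply sub_fsum; auto. { intros; apply prodw_nonneg; auto. }
    intros S HS. apply in_tuples; auto. intros z Hz. apply nodup_In. apply in_concat. exists S; auto.
  - rewrite fsum_tuples. apply pow_le1. split; [apply fsum_nonneg; auto | apply F1, NoDup_nodup].
Qed.

Lemma existsb_forallb {T} (f : T -> bool) l : existsb f l = negb (forallb (fun x => negb (f x)) l).
Proof. induction l; simpl; auto. rewrite IHl. destruct (f a); auto. Qed.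

Lemma fsum_minus {T} (f g : T -> R) l : fsum (fun z => f z - g z) l = fsum f l - fsum g l.
Proof.
  rewrite <- (Rplus_0_r (fsum f l)). replace (fsum f l + 0 - fsum g l) with (fsum f l + (-1) * fsum g l) by lra.
  rewrite <- fsum_scal, <- fsum_plus. apply fsum_ext; intros; lra.
Qed.

Lemma forallb_ext2 {T} (f g : T -> bool) l : (forall x, f x = g x) -> forallb f l = forallb g l.
Proof. intros H; induction l; simpl; auto. rewrite H, IHl; auto. Qed.

Definition ntt (z : X * Y) : bool := negb (typ z).
Definition goodS (c1 c0 : bool) (S : list (X * Y)) : bool :=
  (c1 || negb (forallb ntt S)) && (c0 || negb (forallb typ S)).

Lemma fsum_forall (P : X * Y -> bool) G n :
  fsum (fun S => prodw p S * (if forallb P S then 1 else 0)) (tuples n G) = (fsum p (filter P G)) ^ n.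
Proof.
  rewrite (fsum_ext _ (prodw (fun z => if P z then p z else 0))) by (intros; apply prodw_forall).
  rewrite fsum_tuples, fsum_filter. reflexivity.
Qed.

Lemma PAC_main delta n : 0 < delta < 1 -> (1 <= n)%nat -> (1 - eps) ^ n < delta / 4 ->
  exists v, 1 - delta <= v /\
    prob (sample_weight p)
      (fun S => length S = n /\ exists e, prob p (fun z => Alg0 S (fst z) <> snd z) e /\ e <= eps) v.
Proof.
  intros Hd Hn Hpow.
  destruct (prob_exists (sample_weight p)
      (fun S => length S = n /\ exists e, prob p (fun z => Alg0 S (fst z) <> snd z) e /\ e <= eps) 1)
    as [v Hv].
  { intros LS HN HE. apply Bound1 with n; auto. intros S HS; apply HE; auto. }
  exists v; split; auto.
  assert (Hnr : 1 <= INR n) by (apply (le_INR 1); auto).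
  set (eta := delta / (2 * INR n)).
  assert (Heta : 0 < eta <= 1/2).
  { unfold eta. split; [apply Rdiv_lt_0_compat; lra|].
    apply Rmult_le_reg_r with (2 * INR n); [lra|]. unfold Rdiv. rewrite Rmult_assoc, Rinv_l by lra. nra. }
  destruct (F2 eta ltac:(lra)) as [F0 [NF0 SF0]].
  assert (HL1 : exists L1, NoDup L1 /\ (forall z, In z L1 -> typ z = true) /\ (~ Q true -> eps < fsum p L1)).
  { destruct (classic (Q true)) as [q|nq].
    - exists []. split; [constructor|]. split; [intros z []|tauto].
    - unfold Q in nq. apply not_all_ex_not in nq as [L nq]. apply imply_to_and in nq as [HN nq].
      apply imply_to_and in nq as [HT nq]. exists L. split; auto. split; auto. intros _; lra. }
  assert (HL0 : exists L0, NoDup L0 /\ (forall z, In z L0 -> typ z = false) /\ (~ Q false -> eps < fsum p L0)).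
  { destruct (classic (Q false)) as [q|nq].
    - exists []. split; [constructor|]. split; [intros z []|tauto].
    - unfold Q in nq. apply not_all_ex_not in nq as [L nq]. apply imply_to_and in nq as [HN nq].
      apply imply_to_and in nq as [HT nq]. exists L. split; auto. split; auto. intros _; lra. }
  destruct HL1 as [L1 [NL1 [TL1 SL1]]]. destruct HL0 as [L0 [NL0 [TL0 SL0]]].
  set (G := filter good (nodup XY_dec (F0 ++ L1 ++ L0))).
  assert (NG : NoDup G) by (apply NoDup_filter, NoDup_nodup).
  assert (inG : forall z, In z (F0 ++ L1 ++ L0) -> good z = true -> In z G).
  { intros z H1 H2. apply filter_In. split; auto. apply nodup_In; auto. }
  assert (goodG : forall z, In z G -> good z = true) by (intros z Hz; apply filter_In in Hz; tauto).
  assert (SG : fsum p F0 <= fsum p G).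
  { unfold G. rewrite fsum_good. apply sub_fsum; auto. intros z Hz; apply nodup_In; apply in_or_app; auto. }
  assert (G1 : fsum p G <= 1) by (apply F1; auto).
  assert (Gsplit : fsum p G = fsum p (filter typ G) + fsum p (filter ntt G)).
  { rewrite !fsum_filter, <- fsum_plus. apply fsum_ext. intros z _. unfold ntt. destruct (typ z); simpl; lra. }
  assert (ST : ~ Q true -> eps < fsum p (filter typ G)).
  { intros nq. specialize (SL1 nq). rewrite <- fsum_good in SL1.
    assert (fsum p (filter good L1) <= fsum p (filter typ G)); [|lra].
    apply sub_fsum; auto. apply NoDup_filter; auto.
    intros z Hz. apply filter_In in Hz as [Hz Gz]. apply filter_In. split; [apply inG; auto|auto].
    apply in_or_app; right; apply in_or_app; auto. }
  assert (SF : ~ Q false -> eps < fsum p (filter ntt G)).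
  { intros nq. specialize (SL0 nq). rewrite <- fsum_good in SL0.
    assert (fsum p (filter good L0) <= fsum p (filter ntt G)); [|lra].
    apply sub_fsum; auto. apply NoDup_filter; auto.
    intros z Hz. apply filter_In in Hz as [Hz Gz]. apply filter_In. split; [apply inG; auto|].
    - apply in_or_app; right; apply in_or_app; auto.
    - unfold ntt; rewrite TL0; auto. }
  set (q1 := if excluded_middle_informative (Q true) then true else false).
  set (q0 := if excluded_middle_informative (Q false) then true else false).
  assert (Hq1 : q1 = true -> Q true).
  { intros H; unfold q1 in H; destruct (excluded_middle_informative (Q true)); [auto|discriminate]. }
  assert (Hq1' : q1 = false -> ~ Q true).
  { intros H; unfold q1 in H; destruct (excluded_middle_informative (Q true)); [discriminate|auto]. }
  assert (Hq0 : q0 = true -> Q false).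
  { intros H; unfold q0 in H; destruct (excluded_middle_informative (Q false)); [auto|discriminate]. }
  assert (Hq0' : q0 = false -> ~ Q false).
  { intros H; unfold q0 in H; destruct (excluded_middle_informative (Q false)); [discriminate|auto]. }
  set (T := tuples n G).
  set (LS := filter (goodS q1 q0) T).
  assert (NLS : NoDup LS) by (apply NoDup_filter, nodup_tuples; auto).
  assert (LSE : forall S, In S LS -> length S = n /\ exists e, prob p (fun z => Alg0 S (fst z) <> snd z) e /\ e <= eps).
  { intros S HS. apply filter_In in HS as [HS GS]. apply in_tuples_inv in HS as [LenS InS].
    split; auto.
    assert (gS : forall z, In z S -> good z = true) by auto.
    assert (Sne : S <> []) by (intros E; rewrite E in LenS; simpl in LenS; lia).
    unfold goodS in GS. apply andb_prop in GS as [G1' G0'].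
    destruct (forallb ntt S) eqn:f1; destruct (forallb typ S) eqn:f0.
    - exfalso. destruct S as [|z S]; [congruence|]. simpl in f1, f0.
      apply andb_prop in f1 as [f1 _]; apply andb_prop in f0 as [f0 _]. unfold ntt in f1. rewrite f0 in f1. discriminate.
    - rewrite orb_false_r in G1'. apply Hq1 in G1'.
      apply (E_one S false); auto. intros z Hz. rewrite forallb_forall in f1. specialize (f1 z Hz).
      unfold ntt in f1. destruct (typ z); auto.
    - rewrite orb_false_r in G0'. apply Hq0 in G0'.
      apply (E_one S true); auto. intros z Hz. rewrite forallb_forall in f0. auto.
    - exists 0. split; [|lra]. apply E_both; auto.
      + assert (E1 : existsb typ S = true).
        { rewrite existsb_forallb. change (fun x => negb (typ x)) with ntt. rewrite f1; auto. }
        apply existsb_exists in E1 as [z [Hz Ez]]. exists z; auto.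
      + assert (E1 : existsb ntt S = true).
        { rewrite existsb_forallb. rewrite (forallb_ext2 (fun x => negb (ntt x)) typ).
          - rewrite f0; auto.
          - intros z; unfold ntt; destruct (typ z); auto. }
        apply existsb_exists in E1 as [z [Hz Ez]]. exists z; split; auto. unfold ntt in Ez. destruct (typ z); auto. }
  assert (Hv1 : fsum (sample_weight p) LS <= v) by (apply (prob_ub _ _ v LS Hv NLS); auto).
  set (c1 := if q1 then 0 else 1). set (c0 := if q0 then 0 else 1).
  assert (Hlow : fsum (fun S => prodw p S - c1 * (prodw p S * (if forallb ntt S then 1 else 0))
                                 - c0 * (prodw p S * (if forallb typ S then 1 else 0))) T
                 <= fsum (sample_weight p) LS).
  { change (fsum (fun S => prodw p S - c1 * (prodw p S * (if forallb ntt S then 1 else 0))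
                                 - c0 * (prodw p S * (if forallb typ S then 1 else 0))) T
                 <= fsum (prodw p) (filter (goodS q1 q0) T)).
    rewrite fsum_filter. apply fsum_le. intros S _.
    pose proof (prodw_nonneg p S Hp0). unfold goodS, c1, c0.
    destruct q1, q0, (forallb ntt S), (forallb typ S); simpl; lra. }
  rewrite !fsum_minus, !fsum_scal in Hlow. unfold T in Hlow. rewrite !fsum_forall in Hlow.
  change (fsum (prodw p) (tuples n G)) with (fsum (prodw p) (tuples n G)) in Hlow.
  rewrite fsum_tuples in Hlow.
  assert (B0 : 1 - delta / 2 <= (fsum p G) ^ n).
  { apply Rle_trans with ((1 - eta) ^ n).
    - pose proof (bernoulli eta n ltac:(lra)).
      assert (INR n * eta = delta / 2) by (unfold eta; field; lra). lra.
    - apply pow_incr. lra. }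
  assert (B1 : c1 * (fsum p (filter ntt G)) ^ n <= (1 - eps) ^ n).
  { unfold c1. destruct q1 eqn:Eq1.
    - rewrite Rmult_0_l. apply pow_le; lra.
    - rewrite Rmult_1_l. apply pow_incr. split; [apply fsum_nonneg; auto|].
      specialize (ST (Hq1' eq_refl)). lra. }
  assert (B2 : c0 * (fsum p (filter typ G)) ^ n <= (1 - eps) ^ n).
  { unfold c0. destruct q0 eqn:Eq0.
    - rewrite Rmult_0_l. apply pow_le; lra.
    - rewrite Rmult_1_l. apply pow_incr. split; [apply fsum_nonneg; auto|].
      specialize (SF (Hq0' eq_refl)). lra. }
  lra.
Qed.

End PAC.


Lemma m_exists eps delta : exists N : nat,
  (0 < eps < 1 -> 0 < delta < 1 -> forall n, (N <= n)%nat -> (1 - eps) ^ n < delta / 4).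
Proof.
  destruct (classic (0 < eps < 1 /\ 0 < delta < 1)) as [[He Hd]|H].
  - destruct (pow_lt_1_zero (1 - eps) ltac:(rewrite Rabs_right; lra) (delta / 4) ltac:(lra)) as [N HN].
    exists N. intros _ _ n Hn. specialize (HN n Hn). rewrite Rabs_right in HN; auto.
    apply Rle_ge, pow_le; lra.
  - exists 0%nat. intros; exfalso; tauto.
Qed.

Definition m_pac (eps delta : R) : nat :=
  Nat.max 1 (proj1_sig (constructive_indefinite_description _ (m_exists eps delta))).

Lemma PAC_part : PAC_learnable H_OTP.
Proof.
  exists Alg0, m_pac.
  intros p [Hp0 Hp1] [h [[A [B [_ [_ ->]]]] Hreal]] eps delta He Hd n Hn.
  unfold m_pac in Hn.
  destruct (constructive_indefinite_description _ (m_exists eps delta)) as [N HN].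
  change (Nat.max 1 N <= n)%nat in Hn.
  assert (H1 : (1 <= n)%nat) by (eapply Nat.max_lub_l; eauto).
  assert (H2 : (N <= n)%nat) by (eapply Nat.max_lub_r; eauto).
  apply (PAC_main p Hp0 Hp1 A B Hreal eps He delta n Hd H1).
  apply HN; auto.
Qed.

Theorem theorem1 :
  trans_learnable H_OTP /\ PAC_learnable H_OTP /\
  ~ (exists psi : (X -> Y) -> X -> R,
       local_regularizer H_OTP psi /\ psi_trans_learns H_OTP psi).
Proof.
  split; [exact trans_part|]. split; [exact PAC_part|]. exact negative_part.
Qed.
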